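(* Let $f:\mathbb{R}^d\times\mathcal{X}\to\mathbb{R}$ be differentiable in $\theta$, with $\mathcal{X}$ a subset of a Euclidean space and $\sup_{x\in\mathcal{X}}\Vert x\Vert\le D<\infty$. Assume (A1): there are $K_1,K_2>0$ with $\Vert\nabla f(\theta,x)-\nabla f(\hat\theta,\hat x)\Vert\le K_1\Vert\theta-\hat\theta\Vert+K_2\Vert x-\hat x\Vert(\Vert\theta\Vert+\Vert\hat\theta\Vert+1)$ for all $\theta,\hat\theta\in\mathbb{R}^d$, $x,\hat x\in\mathcal{X}$; and (N): $(\xi_k)$ are i.i.d. random vectors in $\mathbb{R}^d$ independent of the minibatches, with continuous everywhere-positive density, $\mathbb{E}\xi_1=0$, $\sigma^2:=\mathbb{E}\Vert\xi_1\Vert^2<\infty$. Let $X_n=(x_1,\dots,x_n)$, $\hat X_n=(\hat x_1,\dots,\hat x_n)\in\mathcal{X}^n$ differ in at most one index, $b\in\{1,\dots,n\}$, $\eta>0$, $(\Omega_k)$ i.i.d. uniformly random $b$-subsets of $\{1,\dots,n\}$, and let $P,\hat P$ be the transition kernels of $\theta_k=\theta_{k-1}-\frac\eta b\sum_{i\in\Omega_k}\nabla f(\theta_{k-1},x_i)+\eta\xi_k$ and $\hat\theta_k=\hat\theta_{k-1}-\frac\eta b\sum_{i\in\Omega_k}\nabla f(\hat\theta_{k-1},\hat x_i)+\eta\xi_k$. Let $\theta_*$ and $\hat\theta_*$ be minimizers of $\frac1n\sum_if(\theta,x_i)$ and $\frac1n\sum_if(\theta,\hat x_i)$, $V(\theta)=1+\Vert\theta-\theta_*\Vert^2$,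 $\hat V(\theta)=1+\Vert\theta-\hat\theta_*\Vert^2$, and for $\psi>0$ let $d_\psi(\mu_1,\mu_2)=\int_{\mathbb{R}^d}(1+\psi V(\theta))\,|\mu_1-\mu_2|(d\theta)$. Then $$\sup_{\theta\in\mathbb{R}^d}\frac{d_\psi(\delta_\theta P,\delta_\theta\hat P)}{\hat V(\theta)}\le\frac{2b}{n}\max\Big\{\psi(4+8\eta^2K_1^2),\ 1+\psi\Big(1+\eta^2\sigma^2+(4+8\eta^2K_1^2)\Vert\theta_*-\hat\theta_*\Vert^2+4\eta^2\sup_{x\in\mathcal{X}}\Vert\nabla f(\theta_*,x)\Vert^2\Big)\Big\}.$$
   Context: $|\mu_1-\mu_2|$ is the total variation measure of the signed measure $\mu_1-\mu_2$; $\delta_\theta P=P(\theta,\cdot)$. *)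

(* Defs.v *)
From HB Require Import structures.
From mathcomp Require Import all_boot all_order all_algebra.
From mathcomp Require Import all_classical all_reals all_analysis.

Set Implicit Arguments.
Unset Strict Implicit.
Unset Printing Implicit Defensive.

Import Order.TTheory GRing.Theory Num.Theory.
Import numFieldNormedType.Exports.
Local Open Scope classical_set_scope.
Local Open Scope ring_scope.

(* Borel (product) sigma-algebra on R^d = 'rV[R]_d, generated by the coordinates *)
Definition rV_measure_display : measure_display -> measure_display.
Proof. exact. Qed.

Section measurable_rV.
Context (R : realType) (d : nat).
Let coor : 'I_d -> 'rV[R]_d -> R := fun i v => v ord0 i.
Let rV_set0 : g_sigma_preimage coor set0.
Proof. exact: sigma_algebra0. Qed.
Let rV_setC A : g_sigma_preimage coor A -> g_sigma_preimage coor (~` A).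
Proof. exact: sigma_algebraC. Qed.
Let rV_bigcup (F : _^nat) : (forall i, g_sigma_preimage coor (F i)) ->
  g_sigma_preimage coor (\bigcup_i (F i)).
Proof. exact: sigma_algebra_bigcup. Qed.
HB.instance Definition _ := @isMeasurable.Build
  (rV_measure_display default_measure_display)
  'rV[R]_d (g_sigma_preimage coor) rV_set0 rV_setC rV_bigcup.
End measurable_rV.

Section defs.
Context {R : realType}.

Definition dotv {k : nat} (u v : 'rV[R]_k) : R := \sum_(i < k) u ord0 i * v ord0 i.
Definition enorm {k : nat} (v : 'rV[R]_k) : R := Num.sqrt (dotv v v).

Definition setcoord {k : nat} (y : 'rV[R]_k) (i : 'I_k) (t : R) : 'rV[R]_k :=
  \row_j (if j == i then t else y ord0 j).

Fixpoint box_integral {k : nat} (a b : 'rV[R]_k) (g : 'rV[R]_k -> R)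
    (s : seq 'I_k) (y : 'rV[R]_k) : \bar R :=
  match s with
  | [::] => (g y)%:E
  | i :: s' => (\int[lebesgue_measure]_(t in `[a ord0 i, b ord0 i])
                  box_integral a b g s' (setcoord y i t))%E
  end.

Definition box {k : nat} (a b : 'rV[R]_k) : set 'rV[R]_k :=
  [set v | forall i, a ord0 i <= v ord0 i <= b ord0 i].

Definition has_lebesgue_density {k : nat} (mu : probability 'rV[R]_k R)
    (p : 'rV[R]_k -> R) : Prop :=
  (forall v, 0 <= p v) /\
  forall a b : 'rV[R]_k, mu (box a b) = box_integral a b p (enum 'I_k) 0.

(* total-variation-weighted distance
   d_w(mu1, mu2) = \int w d|mu1 - mu2| *)
Definition tv_weighted {k : nat} (w : 'rV[R]_k -> R)
    (mu1 mu2 : probability 'rV[R]_k R) : \bar R :=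
  let nu := cadd (charge_of_finite_measure mu1)
                 (copp (charge_of_finite_measure mu2)) in
  ereal_sup [set r | exists (P N : set 'rV[R]_k) (h : hahn_decomposition nu P N),
                       r = (\int[charge_variation h]_x (w x)%:E)%E].

End defs.

Section sgd.
Context {R : realType}.
Local Open Scope ring_scope.

Definition sgd_step {d n : nat} (grad : 'rV[R]_d -> 'I_n -> 'rV[R]_d)
    (eta : R) (b : nat) (S : {set 'I_n}) (theta xi : 'rV[R]_d) : 'rV[R]_d :=
  theta - (eta / b%:R) *: (\sum_(i in S) grad theta i) + eta *: xi.

Definition is_sgd_kernel {d n : nat} (mu_xi : probability 'rV[R]_d R)
    (grad : 'rV[R]_d -> 'I_n -> 'rV[R]_d) (eta : R) (b : nat)
    (P : 'rV[R]_d -> probability 'rV[R]_d R) : Prop :=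
  forall (theta : 'rV[R]_d) (A : set 'rV[R]_d), measurable A ->
    (P theta A = ((('C(n, b))%:R)^-1)%:E *
      (\sum_(S : {set 'I_n} | #|S| == b)
         mu_xi (sgd_step grad eta b S theta @^-1` A)))%E.
End sgd.

(* Main.v *)
Require Import Defs.
From HB Require Import structures.
From mathcomp Require Import all_boot all_order all_algebra.
From mathcomp Require Import all_classical all_reals all_analysis.
From mathcomp Require Import ring lra zify.
From mathcomp Require Import measurable_realfun lebesgue_integral_theory.lebesgue_integral_nonneg.
Import Order.TTheory GRing.Theory Num.Theory.
Import numFieldNormedType.Exports.
Local Open Scope classical_set_scope.
Local Open Scope ring_scope.

Set Implicit Arguments.
Unset Strict Implicit.
Unset Printing Implicit Defensive.
Section norms.
Context {R : realType} {k : nat}.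
Implicit Types u v w : 'rV[R]_k.

Lemma dotvC u v : dotv u v = dotv v u.
Proof. by apply: eq_bigr => i _; rewrite mulrC. Qed.

Lemma dotvDl u v w : dotv (u + v) w = dotv u w + dotv v w.
Proof. by rewrite /dotv -big_split; apply: eq_bigr => i _; rewrite !mxE mulrDl. Qed.

Lemma dotvNl u w : dotv (- u) w = - dotv u w.
Proof. by rewrite /dotv -sumrN; apply: eq_bigr => i _; rewrite !mxE mulNr. Qed.

Lemma dotvZl a u w : dotv (a *: u) w = a * dotv u w.
Proof. by rewrite /dotv mulr_sumr; apply: eq_bigr => i _; rewrite !mxE mulrA. Qed.

Lemma dotvDr u v w : dotv w (u + v) = dotv w u + dotv w v.
Proof. by rewrite dotvC dotvDl (dotvC u) (dotvC v). Qed.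

Lemma dotvNr u w : dotv w (- u) = - dotv w u.
Proof. by rewrite dotvC dotvNl dotvC. Qed.

Lemma dotvZr a u w : dotv w (a *: u) = a * dotv w u.
Proof. by rewrite dotvC dotvZl dotvC. Qed.

Lemma dotv0l w : dotv 0 w = 0.
Proof. by rewrite /dotv big1 // => i _; rewrite mxE mul0r. Qed.

Lemma dotv_suml I (s : seq I) (P : pred I) (F : I -> 'rV[R]_k) w :
  dotv (\sum_(i <- s | P i) F i) w = \sum_(i <- s | P i) dotv (F i) w.
Proof.
elim/big_rec2: _ => [|i x y _ <-]; first exact: dotv0l.
by rewrite dotvDl.
Qed.

Lemma dotv_sumr I (s : seq I) (P : pred I) (F : I -> 'rV[R]_k) w :
  dotv w (\sum_(i <- s | P i) F i) = \sum_(i <- s | P i) dotv w (F i).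
Proof. by rewrite dotvC dotv_suml; apply: eq_bigr => i _; rewrite dotvC. Qed.

Lemma dotv_ge0 v : 0 <= dotv v v.
Proof. by apply: sumr_ge0 => i _; rewrite -expr2 sqr_ge0. Qed.

Lemma enorm2 v : enorm v ^+ 2 = dotv v v.
Proof. by rewrite /enorm sqr_sqrtr // dotv_ge0. Qed.

Lemma enorm_ge0 v : 0 <= enorm v.
Proof. exact: sqrtr_ge0. Qed.

Lemma enorm0 : enorm (0 : 'rV[R]_k) = 0.
Proof. by rewrite /enorm dotv0l sqrtr0. Qed.

Lemma enorm2D u v : enorm (u + v) ^+ 2 <= 2 * enorm u ^+ 2 + 2 * enorm v ^+ 2.
Proof.
rewrite !enorm2 !dotvDl !dotvDr (dotvC v u).
have := dotv_ge0 (u - v); rewrite !dotvDl !dotvDr !dotvNl !dotvNr (dotvC v u).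
lra.
Qed.

Lemma enorm2B u v : enorm (u - v) ^+ 2 <= 2 * enorm u ^+ 2 + 2 * enorm v ^+ 2.
Proof.
have := enorm2D u (- v); rewrite !enorm2 dotvNl dotvNr opprK. done.
Qed.

Lemma enorm2_sum (I : finType) (S : {set I}) (F : I -> 'rV[R]_k) :
  enorm (\sum_(i in S) F i) ^+ 2 <= #|S|%:R * \sum_(i in S) enorm (F i) ^+ 2.
Proof.
have H : 0 <= \sum_(i in S) \sum_(j in S) dotv (F i - F j) (F i - F j).
  by apply: sumr_ge0 => i _; apply: sumr_ge0 => j _; exact: dotv_ge0.
have E : \sum_(i in S) \sum_(j in S) dotv (F i - F j) (F i - F j) =
   2 * (#|S|%:R * \sum_(i in S) dotv (F i) (F i)) -
   2 * dotv (\sum_(i in S) F i) (\sum_(i in S) F i).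
  transitivity (\sum_(i in S) \sum_(j in S)
     (dotv (F i) (F i) + dotv (F j) (F j) - 2 * dotv (F i) (F j))).
    apply: eq_bigr => i _; apply: eq_bigr => j _.
    rewrite !dotvDl !dotvDr !dotvNl !dotvNr. have := dotvC (F j) (F i); lra.
  rewrite dotv_suml.
  under [X in _ = _ - 2 * X]eq_bigr => i _ do rewrite dotv_sumr.
  have e1 : \sum_(i in S) \sum_(j in S) dotv (F i) (F i) = #|S|%:R * \sum_(i in S) dotv (F i) (F i).
    by rewrite mulr_sumr; apply: eq_bigr => i _; rewrite sumr_const mulr_natl.
  have e2 : \sum_(i in S) \sum_(j in S) dotv (F j) (F j) = #|S|%:R * \sum_(i in S) dotv (F i) (F i).
    by rewrite sumr_const mulr_natl.
  have e3 : \sum_(i in S) \sum_(j in S) (dotv (F i) (F i) + dotv (F j) (F j) - 2 * dotv (F i) (F j))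
    = \sum_(i in S) \sum_(j in S) dotv (F i) (F i) + \sum_(i in S) \sum_(j in S) dotv (F j) (F j)
      - 2 * \sum_(i in S) \sum_(j in S) dotv (F i) (F j).
    rewrite mulr_sumr -big_split -sumrB; apply: eq_bigr => i _.
    by rewrite mulr_sumr -big_split -sumrB; apply: eq_bigr => j _.
  rewrite e3 e1 e2; ring.
rewrite !enorm2; under [X in _ <= _ * X]eq_bigr => i _ do rewrite enorm2.
lra.
Qed.

End norms.
Section meas.
Context {R : realType}.

Lemma bigsetU_ex (T : Type) n (F : 'I_n -> set T) x :
  (\big[setU/set0]_(i < n) F i) x <-> exists i, F i x.
Proof.
split.
  by elim/big_rec: _ => [//|i A _ IH]; case => [Fi|/IH//]; exists i.
case=> i Fi; rewrite (bigD1 i) //=; by left.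
Qed.

Lemma mcoord (d : nat) (i : 'I_d) : measurable_fun setT (fun v : 'rV[R]_d => v ord0 i).
Proof.
move=> _ Y mY; rewrite setTI; apply: sub_sigma_algebra; apply/bigsetU_ex.
by exists i; exists Y => //; rewrite setTI.
Qed.

Lemma mrV (d : nat) (dd : measure_display) (T : measurableType dd) (f : T -> 'rV[R]_d) :
  (forall i, measurable_fun setT (fun x => f x ord0 i)) -> measurable_fun setT f.
Proof.
move=> mf.
apply: (@measurability _ _ _ _ _ _
  (\big[setU/set0]_(i < d) preimage_set_system setT (fun v : 'rV[R]_d => v ord0 i) measurable)) => //.
move=> _ [B /bigsetU_ex [i [Y mY <-]] <-].
rewrite setTI.
have := mf i measurableT Y mY; rewrite setTI.
by congr measurable; rewrite setTI.
Qed.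

Lemma mdotv (d : nat) (c : 'rV[R]_d) : measurable_fun setT (fun v : 'rV[R]_d => dotv (v - c) (v - c)).
Proof.
rewrite /dotv; apply: measurable_sum => i.
under eq_fun do rewrite !mxE.
by apply: measurable_realfun.measurable_funM; apply: measurable_realfun.measurable_funB => //; exact: mcoord.
Qed.

Lemma menorm2 (d : nat) (c : 'rV[R]_d) : measurable_fun setT (fun v : 'rV[R]_d => enorm (v - c) ^+ 2).
Proof. by under eq_fun do rewrite enorm2; exact: mdotv. Qed.

Lemma mstep (d n : nat) (grad : 'rV[R]_d -> 'I_n -> 'rV[R]_d) eta b S theta :
  measurable_fun setT (sgd_step grad eta b S theta).
Proof.
apply: mrV => i; rewrite /sgd_step.
under eq_fun do rewrite !mxE.
apply: measurable_realfun.measurable_funD => //; apply: measurable_realfun.measurable_funM => //; exact: mcoord.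
Qed.

End meas.
Section mtools.
Local Open Scope ereal_scope.
Context {R : realType}.

Definition pfm d1 d2 (T1 : measurableType d1) (T2 : measurableType d2)
  (m : {measure set T1 -> \bar R}) (f : T1 -> T2) (mf : measurable_fun setT f) :
  {measure set T2 -> \bar R}.
Proof. refine (pushforward m f : {measure set T2 -> \bar R}). Unshelve. exact: mf. Defined.

Lemma pfmE d1 d2 (T1 : measurableType d1) (T2 : measurableType d2)
  (m : {measure set T1 -> \bar R}) (f : T1 -> T2) (mf : measurable_fun setT f) A :
  pfm m mf A = m (f @^-1` A).
Proof. by []. Qed.

Lemma integral_pfm d1 d2 (T1 : measurableType d1) (T2 : measurableType d2)
  (m : {measure set T1 -> \bar R}) (f : T1 -> T2) (mf : measurable_fun setT f)
  (g : T2 -> \bar R) :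
  measurable_fun setT g -> (forall y, 0 <= g y) ->
  \int[pfm m mf]_y g y = \int[m]_x g (f x).
Proof.
move=> mg g0; rewrite /pfm ge0_integral_pushforward //.
Qed.

Context d (T : measurableType d).

Fixpoint mlist (s : seq {measure set T -> \bar R}) : {measure set T -> \bar R} :=
  match s with
  | [::] => @mzero d T R
  | m :: s' => measure_add m (mlist s')
  end.

Lemma mlistE s A : mlist s A = \sum_(m <- s) m A.
Proof.
elim: s => [|m s IH] /=; first by rewrite big_nil.
by rewrite /msum 2!big_ord_recl/= big_ord0 adde0 IH big_cons.
Qed.

Lemma integral_mlist s (g : T -> \bar R) :
  measurable_fun setT g -> (forall y, 0 <= g y) ->
  \int[mlist s]_y g y = \sum_(m <- s) \int[m]_y g y.
Proof.
move=> mg g0; elim: s => [|m s IH] /=; first by rewrite big_nil integral_measure_zero.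
by rewrite ge0_integral_measure_add // ?IH ?big_cons // => y _; exact: g0.
Qed.

End mtools.
Section K1.
Context {R : realType} {d : nat} (mu : probability 'rV[R]_d R) (sigma2 : R).
Hypothesis hmean : forall i : 'I_d, mu.-integrable setT (fun v => (v ord0 i)%:E) /\
     (\int[mu]_v (v ord0 i)%:E = 0)%E.
Hypothesis hvar : (\int[mu]_v ((enorm v) ^+ 2)%:E)%E = sigma2%:E.

Lemma int_Q : mu.-integrable setT (fun v : 'rV[R]_d => (enorm v ^+ 2)%:E).
Proof.
apply/integrableP; split.
  apply/measurable_EFinP.
  have := menorm2 (0 : 'rV[R]_d); apply: eq_measurable_fun => v _.
  by rewrite subr0.
under eq_integral do rewrite gee0_abs ?lee_fin ?exprn_ge0 ?enorm_ge0 //.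
by rewrite hvar ltry.
Qed.

Lemma int_L (u : 'rV[R]_d) : mu.-integrable setT (fun v : 'rV[R]_d => (dotv u v)%:E).
Proof.
rewrite /dotv.
under eq_fun do rewrite -sumEFin.
apply: (integrable_sum measurableT) => i _.
under eq_fun do rewrite EFinM.
apply: (integrableZl measurableT); exact: (hmean i).1.
Qed.

Lemma integral_L (u : 'rV[R]_d) : (\int[mu]_v (dotv u v)%:E = 0)%E.
Proof.
rewrite /dotv.
under eq_integral do rewrite -sumEFin.
rewrite (integral_sum measurableT); last first.
  move=> i; under eq_fun do rewrite EFinM.
  apply: (integrableZl measurableT); exact: (hmean i).1.
rewrite big1 // => i _.
under eq_integral do rewrite EFinM.
by rewrite integralZl ?(hmean i).2 ?mule0 //; exact: (hmean i).1.
Qed.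

Lemma integral_step (u : 'rV[R]_d) (eta psi : R) :
  (\int[mu]_v (1 + psi * (1 + enorm (u + eta *: v) ^+ 2))%:E =
   (1 + psi * (1 + enorm u ^+ 2 + eta ^+ 2 * sigma2))%:E)%E.
Proof.
have E v : 1 + psi * (1 + enorm (u + eta *: v) ^+ 2) =
   (1 + psi * (1 + enorm u ^+ 2)) + ((psi * 2 * eta) * dotv u v +
    (psi * eta ^+ 2) * enorm v ^+ 2).
  rewrite !enorm2 !dotvDl !dotvDr !dotvZl !dotvZr (dotvC v u); ring.
under eq_integral do rewrite E EFinD.
rewrite integralD //; last 2 first.
- exact: finite_measure_integrable_cst.
- under eq_fun do rewrite EFinD; apply: (integrableD measurableT) => //.
    by under eq_fun do rewrite EFinM; apply: (integrableZl measurableT); exact: int_L.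
  by under eq_fun do rewrite EFinM; apply: (integrableZl measurableT); exact: int_Q.
rewrite integral_cst //.
rewrite [X in (_ * X)%E](_ : _ = 1%E); last exact: probability_setT.
rewrite mule1.
under eq_integral do rewrite EFinD.
rewrite integralD //; last 2 first.
- by under eq_fun do rewrite EFinM; apply: (integrableZl measurableT); exact: int_L.
- by under eq_fun do rewrite EFinM; apply: (integrableZl measurableT); exact: int_Q.
under eq_integral do rewrite EFinM.
rewrite integralZl //; last exact: int_L.
under [X in (_ + (_ + X))%E]eq_integral do rewrite EFinM.
rewrite integralZl //; last exact: int_Q.
rewrite integral_L hvar mule0 add0e -!EFinM -EFinD; congr EFin; ring.
Qed.

End K1.
Section K2.
Context {R : realType} {d m : nat}.
Variables (X : set 'rV[R]_m) (gradf : 'rV[R]_d -> 'rV[R]_m -> 'rV[R]_d) (K1 K2 : R).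
Hypothesis K20 : 0 <= K2.
Hypothesis A1 : forall theta thetah z zh, X z -> X zh ->
     enorm (gradf theta z - gradf thetah zh) <=
       K1 * enorm (theta - thetah) +
       K2 * enorm (z - zh) * (enorm theta + enorm thetah + 1).

Lemma A1' theta thetah z : X z ->
  enorm (gradf theta z - gradf thetah z) <= K1 * enorm (theta - thetah).
Proof.
by move=> Xz; have := A1 theta thetah Xz Xz; rewrite subrr enorm0 mulr0 mul0r addr0.
Qed.

Lemma G_bounded (D : R) theta_s z0 : X z0 -> (forall z, X z -> enorm z <= D) ->
  has_ubound [set enorm (gradf theta_s z) ^+ 2 | z in X].
Proof.
move=> Xz0 XD.
have D0 : 0 <= D by apply: le_trans (XD _ Xz0); exact: enorm_ge0.
set q := enorm theta_s + enorm theta_s + 1.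
have q0 : 0 <= q by rewrite /q; have := enorm_ge0 theta_s; lra.
exists (2 * (K2 * (2 * D) * q) ^+ 2 + 2 * enorm (gradf theta_s z0) ^+ 2).
move=> _ [z Xz <-].
have h1 := enorm2D (gradf theta_s z - gradf theta_s z0) (gradf theta_s z0).
rewrite subrK in h1; apply: le_trans h1 _.
rewrite lerD2r ler_pM2l //.
have := A1 theta_s theta_s Xz Xz0; rewrite subrr enorm0 mulr0 add0r -/q => h.
have hzz : enorm (z - z0) <= 2 * D.
  have e2 := enorm2B z z0.
  have hz := XD _ Xz; have hz0 := XD _ Xz0.
  have := enorm_ge0 z; have := enorm_ge0 z0; have := enorm_ge0 (z - z0).
  nra.
have h2 : K2 * enorm (z - z0) * q <= K2 * (2 * D) * q.
  by apply: ler_wpM2r => //; apply: ler_wpM2l.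
have := enorm_ge0 (gradf theta_s z - gradf theta_s z0).
nra.
Qed.

Lemma K2bound (n : nat) (b : nat) (z : 'I_n -> 'rV[R]_m) (S : {set 'I_n})
  (theta theta_s theta_hs : 'rV[R]_d) (G eta psi sigma2 : R) :
  (forall i, X (z i)) -> #|S| = b -> (0 < b)%N ->
  (forall z, X z -> enorm (gradf theta_s z) ^+ 2 <= G) ->
  0 <= psi ->
  let c := 4 + 8 * eta ^+ 2 * K1 ^+ 2 in
  1 + psi * (1 + enorm (theta - (eta / b%:R) *: (\sum_(i in S) gradf theta (z i)) - theta_s) ^+ 2
             + eta ^+ 2 * sigma2)
  <= Num.max (psi * c)
         (1 + psi * (1 + eta ^+ 2 * sigma2 + c * enorm (theta_s - theta_hs) ^+ 2
                     + 4 * eta ^+ 2 * G)) * (1 + enorm (theta - theta_hs) ^+ 2).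
Proof.
move=> Xz Sb b0 hG psi0 /=.
set c := 4 + 8 * eta ^+ 2 * K1 ^+ 2.
set M := (X in _ <= X * _).
have hM1 : psi * c <= M by rewrite le_max lexx.
have hM2 : 1 + psi * (1 + eta ^+ 2 * sigma2 + c * enorm (theta_s - theta_hs) ^+ 2
                     + 4 * eta ^+ 2 * G) <= M by rewrite le_max lexx orbT.
set r := theta - theta_s.
set g := b%:R^-1 *: (\sum_(i in S) gradf theta (z i)).
have ue : theta - (eta / b%:R) *: (\sum_(i in S) gradf theta (z i)) - theta_s = r - eta *: g.
  by rewrite /r /g scalerA addrAC.
rewrite ue.
set t := enorm (theta - theta_hs) ^+ 2.
set De := enorm (theta_s - theta_hs) ^+ 2.
set Rr := enorm r ^+ 2.
have t0 : 0 <= t by rewrite /t exprn_ge0 // enorm_ge0.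
have hR : Rr <= 2 * t + 2 * De.
  rewrite /Rr (_ : r = (theta - theta_hs) - (theta_s - theta_hs)); last first.
    by rewrite /r opprB addrA subrK.
  exact: enorm2B.
have hgi : forall i, enorm (gradf theta (z i)) ^+ 2 <= 2 * K1 ^+ 2 * Rr + 2 * G.
  move=> i.
  have h1 := enorm2D (gradf theta (z i) - gradf theta_s (z i)) (gradf theta_s (z i)).
  rewrite subrK in h1; apply: le_trans h1 _.
  have h2 := A1' theta theta_s (Xz i).
  have h3 := enorm_ge0 (gradf theta (z i) - gradf theta_s (z i)).
  have h4 := hG _ (Xz i).
  have h5 : enorm (gradf theta (z i) - gradf theta_s (z i)) ^+ 2 <= K1 ^+ 2 * Rr.
    rewrite /Rr; move: h2 h3; rewrite -/r; nra.
  lra.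
have hg : enorm g ^+ 2 <= 2 * K1 ^+ 2 * Rr + 2 * G.
  have bpos : 0 < b%:R :> R by rewrite ltr0n.
  rewrite /g !enorm2 dotvZl dotvZr -enorm2.
  have hs := enorm2_sum S (fun i => gradf theta (z i)).
  rewrite Sb in hs.
  have hs2 : \sum_(i in S) enorm (gradf theta (z i)) ^+ 2 <= b%:R * (2 * K1 ^+ 2 * Rr + 2 * G).
    rewrite -Sb mulr_natl -sumr_const; apply: ler_sum => i _; exact: hgi.
  have : b%:R^-1 * (b%:R^-1 * enorm (\sum_(i in S) gradf theta (z i)) ^+ 2) <=
         b%:R^-1 * (b%:R^-1 * (b%:R * (b%:R * (2 * K1 ^+ 2 * Rr + 2 * G)))).
    apply: ler_wpM2l; first by rewrite invr_ge0 ltW.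
    apply: ler_wpM2l; first by rewrite invr_ge0 ltW.
    apply: le_trans hs _; apply: ler_wpM2l; [exact: ltW|exact: hs2].
  by move=> H; apply: le_trans H _; rewrite mulKf ?gt_eqF // mulKf ?gt_eqF.
have hu : enorm (r - eta *: g) ^+ 2 <= c * t + c * De + 4 * eta ^+ 2 * G.
  have h1 := enorm2B r (eta *: g).
  rewrite [enorm (eta *: g) ^+ 2]enorm2 dotvZl dotvZr -enorm2 -/Rr in h1.
  have h2 : eta * (eta * enorm g ^+ 2) <= eta ^+ 2 * (2 * K1 ^+ 2 * Rr + 2 * G).
    by rewrite mulrA -expr2; exact: (ler_wpM2l (sqr_ge0 eta) hg).
  have h3 : (2 + 4 * eta ^+ 2 * K1 ^+ 2) * Rr <= (2 + 4 * eta ^+ 2 * K1 ^+ 2) * (2 * t + 2 * De).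
    apply: ler_wpM2l => //.
    have := sqr_ge0 eta; have := sqr_ge0 K1.
    move=> a b'; have := mulr_ge0 b' a; lra.
  rewrite /c; lra.
have h1 : psi * (enorm (r - eta *: g) ^+ 2) <= psi * (c * t + c * De + 4 * eta ^+ 2 * G).
  exact: ler_wpM2l.
have h2 : psi * c * t <= M * t by apply: ler_wpM2r.
move: h1 h2 hM2; rewrite /t /De; clearbody M c; lra.
Qed.
End K2.
Section countbin.
Local Close Scope classical_set_scope.
Lemma count_bin n b (i0 : 'I_n) : (0 < b)%N ->
  (#|[set S : {set 'I_n} | (#|S| == b) && (i0 \in S)]| * n = b * 'C(n, b))%N.
Proof.
move=> b0.
set A := [set S : {set 'I_n} | #|S| == b].
set B := [set S : {set 'I_n} | i0 \in S].
have hA : #|A| = 'C(n, b) by rewrite /A card_draws card_ord.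
have hAB : #|A :\: B| = 'C(n.-1, b).
  have := cards_draws [set~ i0] b; rewrite cardsC1 card_ord => <-.
  apply: eq_card => S; rewrite !inE.
  have -> : (S \subset [set~ i0]) = (i0 \notin S).
    apply/idP/idP => [/fintype.subsetP h|Si0].
      by apply/negP => /h; rewrite !inE eqxx.
    apply/fintype.subsetP => j Sj; rewrite !inE; apply/eqP => ji.
    by move: Si0; rewrite -ji Sj.
  by rewrite andbC.
have hAIB : A :&: B = [set S : {set 'I_n} | (#|S| == b) && (i0 \in S)].
  by apply/setP => S; rewrite !inE.
have := cardsID B A; rewrite hA hAB hAIB.
case: n i0 A B hA hAB hAIB => [[//]|n'] i0 A B _ _ _.
case: b b0 => [//|b'] _ /=.
move=> H.
have -> : #|[set S : {set 'I_n'.+1} | (#|S| == b'.+1) && (i0 \in S)]| = 'C(n', b').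
  by move: H; rewrite binS => /eqP; rewrite addnC eqn_add2l => /eqP.
by rewrite mulnC (mul_bin_diag n'.+1 b').
Qed.
End countbin.
Section core.
Context {R : realType} {d n : nat} (mu : probability 'rV[R]_d R)
  (gr grh : 'rV[R]_d -> 'I_n -> 'rV[R]_d) (eta : R) (b : nat)
  (P Ph : 'rV[R]_d -> probability 'rV[R]_d R) (i0 : 'I_n).
Hypothesis hP : is_sgd_kernel mu gr eta b P.
Hypothesis hPh : is_sgd_kernel mu grh eta b Ph.
Hypothesis hsame : forall t i, i != i0 -> gr t i = grh t i.
Hypothesis b0 : (0 < b)%N.
Hypothesis bn : (b <= n)%N.

Definition pr (f : 'rV[R]_d -> 'rV[R]_d) (E : set 'rV[R]_d) : R := fine (mu (f @^-1` E)).

Lemma prE f E : measurable_fun setT f -> measurable E -> mu (f @^-1` E) = (pr f E)%:E.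
Proof.
move=> mf mE; rewrite /pr fineK // fin_num_measure //.
by rewrite -(setTI (f @^-1` E)); exact: mf.
Qed.

Lemma pr_ge0 f E : 0 <= pr f E.
Proof. exact/fine_ge0/measure_ge0. Qed.

Lemma pr_le f E F : measurable_fun setT f -> measurable E -> measurable F ->
  E `<=` F -> pr f E <= pr f F.
Proof.
move=> mf mE mF EF.
have mfE : measurable (f @^-1` E) by rewrite -(setTI (f @^-1` E)); exact: mf.
have mfF : measurable (f @^-1` F) by rewrite -(setTI (f @^-1` F)); exact: mf.
rewrite /pr fine_le ?fin_num_measure //.
by apply: le_measure; rewrite ?inE // => x /= /EF.
Qed.

Lemma kerR gg K : is_sgd_kernel mu gg eta b K -> forall t E, measurable E ->
  K t E = ((('C(n, b))%:R^-1) *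
      \sum_(S : {set 'I_n} | #|S| == b) pr (sgd_step gg eta b S t) E)%:E.
Proof.
move=> hK t E mE; rewrite hK //.
under eq_bigr => S _ do rewrite (prE (mstep _ _ _ _ _) mE).
by rewrite sumEFin EFinM.
Qed.

Lemma core t (w : 'rV[R]_d -> R) (B : R) : measurable_fun setT w -> (forall v, 0 <= w v) ->
  (forall S : {set 'I_n}, #|S| = b -> (\int[mu]_v (w (sgd_step gr eta b S t v))%:E <= B%:E)%E) ->
  (forall S : {set 'I_n}, #|S| = b -> (\int[mu]_v (w (sgd_step grh eta b S t v))%:E <= B%:E)%E) ->
  (tv_weighted w (P t) (Ph t) <= ((2 * b%:R / n%:R) * B)%:E)%E.
Proof.
move=> mw w0 hB hBh.
rewrite /tv_weighted; apply: ub_ereal_sup => _ [Pp [Nn [h ->]]].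
set C := ('C(n, b))%:R : R.
have C0 : 0 < C by rewrite ltr0n bin_gt0.
pose sel := [set S : {set 'I_n} | (#|S| == b) && (i0 \in S)]%SET.
pose stp S := sgd_step gr eta b S t.
pose stph S := sgd_step grh eta b S t.
pose lam := mlist [seq (measure_add (pfm mu (mstep gr eta b Q t)) (pfm mu (mstep grh eta b Q t)) : {measure set _ -> \bar R})
                  | Q <- enum sel].
have cc0 : 0 <= C^-1 by rewrite invr_ge0 ltW.
pose lamc := mscale (NngNum cc0) lam.
have lamE A : measurable A -> lam A = (\sum_(S in sel) (pr (stp S) A + pr (stph S) A))%:E.
  move=> mA; rewrite mlistE big_map big_enum -sumEFin; apply: eq_bigr => S _.
  transitivity (measure_add (pfm mu (mstep gr eta b S t)) (pfm mu (mstep grh eta b S t)) A); first by [].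
  rewrite measure_addE !pfmE /pr EFinD !fineK ?fin_num_measure //;
    by rewrite -(setTI (_ @^-1` _)); apply: mstep.
have step_eq (S : {set 'I_n}) : i0 \notin S -> stp S = stph S.
  move=> nS; rewrite /stp /stph /sgd_step; apply/funext => v.
  congr (_ - _ + _); congr (_ *: _); apply: eq_bigr => i iS; apply: hsame.
  by apply/eqP => ii0; move: nS; rewrite -ii0 iS.
have hsplit E : \sum_(S : {set 'I_n} | #|S| == b) (pr (stp S) E - pr (stph S) E) =
                \sum_(S in sel) (pr (stp S) E - pr (stph S) E).
  rewrite (bigID (fun S : {set 'I_n} => i0 \in S)) /= [X in _ + X]big1 ?addr0; last first.
    by move=> S /andP[_ nS]; rewrite step_eq // subrr.
  by apply: eq_bigl => S; rewrite inE.
have mst S : measurable_fun setT (stp S) by exact: mstep.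
have msth S : measurable_fun setT (stph S) by exact: mstep.
have hA A : measurable A -> (charge_variation h A <= lamc A)%E.
  move=> mA.
  have [mPp mNn] : measurable Pp /\ measurable Nn by case: h => -[? _] [? _] _ _.
  have mAP := measurableI _ _ mA mPp; have mAN := measurableI _ _ mA mNn.
  rewrite /charge_variation /= jordan_posE jordan_negE cjordan_posE cjordan_negE /crestr0 mem_set //=.
  rewrite /crestr /= /cadd /copp /charge_of_finite_measure /=.
  rewrite !(kerR hP) // /copp /= !(kerR hPh) //.
  rewrite /lamc /mscale /= lamE //.
  rewrite -!EFinD -EFinM lee_fin.
  set aP := fun S => pr (stp S) (A `&` Pp).
  have e : forall E, C^-1 * \sum_(S : {set 'I_n} | #|S| == b) pr (stp S) E -
            C^-1 * \sum_(S : {set 'I_n} | #|S| == b) pr (stph S) E =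
            C^-1 * \sum_(S in sel) (pr (stp S) E - pr (stph S) E).
    by move=> E; rewrite -hsplit sumrB mulrBr.
  rewrite /stp /stph in e.
  rewrite !e.
  rewrite -mulrBr; apply: ler_wpM2l => //.
  rewrite -sumrB; apply: ler_sum => S _.
  have := pr_le (mst S) mAP mA (@subIsetl _ A Pp).
  have := pr_le (msth S) mAN mA (@subIsetl _ A Nn).
  have := pr_ge0 (stph S) (A `&` Pp); have := pr_ge0 (stp S) (A `&` Nn).
  rewrite /stp /stph; lra.
have mwE : measurable_fun setT (fun x => (w x)%:E) by exact/measurable_EFinP.
have w0E : forall x, (0 <= (w x)%:E)%E by move=> x; rewrite lee_fin.
apply: (le_trans (@ge0_le_measure_integral _ _ _ (charge_variation h) lamc hA
          (fun x => (w x)%:E) setT measurableT w0E mwE)).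
rewrite ge0_integral_mscale //= integral_mlist // big_map big_enum /=.
have hS : forall S, S \in sel ->
   (\int[measure_add (pfm mu (mstep gr eta b S t)) (pfm mu (mstep grh eta b S t))]_x (w x)%:E
    <= (B + B)%:E)%E.
  move=> S; rewrite inE => /andP[/eqP Sb _].
  rewrite ge0_integral_measure_add // ?integral_pfm // EFinD.
  by apply: leeD; [exact: hB | exact: hBh].
set LHS := (\sum_(i in sel) _)%R.
have hsum : (LHS <= \sum_(i in sel) (B + B)%:E)%E.
  by apply: lee_sum => i /hS.
apply: le_trans (lee_wpmul2l _ hsum) _; first by rewrite lee_fin.
rewrite sumEFin sumr_const -EFinM lee_fin.
have hc := count_bin i0 b0.
have hc' : (#|sel|%:R * n%:R = b%:R * C :> R).
  by rewrite -!natrM; congr (_%:R); rewrite /sel hc.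
have n0 : (0 < n%:R :> R) by rewrite ltr0n; exact: leq_trans bn.
rewrite -[(B + B) *+ _]mulr_natr.
have -> : #|sel|%:R = b%:R * C / n%:R :> R by rewrite -hc' mulfK ?gt_eqF.
have Cn0 : C != 0 by rewrite gt_eqF.
have nn0 : n%:R != 0 :> R by rewrite gt_eqF.
rewrite le_eqVlt; apply/orP; left; apply/eqP; field.
by rewrite Cn0 nn0.
Qed.
End core.

Unset Implicit Arguments.
Set Strict Implicit.
Theorem lemmaD4 (R : realType) (d m n b : nat)
  (X : set 'rV[R]_m) (D : R)
  (f : 'rV[R]_d -> 'rV[R]_m -> R) (gradf : 'rV[R]_d -> 'rV[R]_m -> 'rV[R]_d)
  (K1 K2 : R) (mu_xi : probability 'rV[R]_d R) (p : 'rV[R]_d -> R) (sigma2 : R)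
  (x xh : 'I_n -> 'rV[R]_m) (eta psi : R)
  (P Ph : 'rV[R]_d -> probability 'rV[R]_d R)
  (theta_s theta_hs : 'rV[R]_d) :
  (* X bounded *)
  (forall z, X z -> enorm z <= D) ->
  (* f differentiable in theta, with gradient gradf *)
  (forall z theta, X z -> differentiable (fun t => f t z) theta /\
     forall v, 'D_v (fun t => f t z) theta = dotv (gradf theta z) v) ->
  (* (A1) *)
  0 < K1 -> 0 < K2 ->
  (forall theta thetah z zh, X z -> X zh ->
     enorm (gradf theta z - gradf thetah zh) <=
       K1 * enorm (theta - thetah) +
       K2 * enorm (z - zh) * (enorm theta + enorm thetah + 1)) ->
  (* (N) *)
  continuous p -> (forall v, 0 < p v) -> has_lebesgue_density mu_xi p ->
  (forall i : 'I_d, mu_xi.-integrable setT (fun v => (v ord0 i)%:E) /\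
     (\int[mu_xi]_v (v ord0 i)%:E = 0)%E) ->
  (\int[mu_xi]_v ((enorm v) ^+ 2)%:E)%E = sigma2%:E ->
  (* datasets differing in at most one index *)
  (forall i, X (x i)) -> (forall i, X (xh i)) ->
  (exists i0 : 'I_n, forall i, i != i0 -> x i = xh i) ->
  (0 < b)%N -> (b <= n)%N -> 0 < eta ->
  is_sgd_kernel mu_xi (fun theta i => gradf theta (x i)) eta b P ->
  is_sgd_kernel mu_xi (fun theta i => gradf theta (xh i)) eta b Ph ->
  (* minimizers of the empirical risks *)
  (forall theta, n%:R^-1 * (\sum_i f theta_s (x i)) <=
                 n%:R^-1 * (\sum_i f theta (x i))) ->
  (forall theta, n%:R^-1 * (\sum_i f theta_hs (xh i)) <=
                 n%:R^-1 * (\sum_i f theta (xh i))) ->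
  0 < psi ->
  let V := fun theta => 1 + enorm (theta - theta_s) ^+ 2 in
  let Vh := fun theta => 1 + enorm (theta - theta_hs) ^+ 2 in
  let dpsi := tv_weighted (fun theta => 1 + psi * V theta) in
  let c := 4 + 8 * eta ^+ 2 * K1 ^+ 2 in
  let G := sup [set enorm (gradf theta_s z) ^+ 2 | z in X] in
  (ereal_sup [set (dpsi (P theta) (Ph theta) * ((Vh theta)^-1)%:E)%E
              | theta in [set: 'rV[R]_d]]
   <= ((2 * b%:R / n%:R) *
       Num.max (psi * c)
         (1 + psi * (1 + eta ^+ 2 * sigma2 + c * enorm (theta_s - theta_hs) ^+ 2
                     + 4 * eta ^+ 2 * G)))%:E)%E.
Proof.
move=> XD hdiff K10 K20 A1 pc ppos hdens hmean hvar Xx Xxh [i0 hi0] b0 bn eta0 hP hPh hmin hminh psi0.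
cbv zeta.
set G := sup _.
set c := 4 + 8 * eta ^+ 2 * K1 ^+ 2.
set M := Num.max _ _.
have n0 : (0 < n)%N := leq_trans b0 bn.
have XG : forall z, X z -> enorm (gradf theta_s z) ^+ 2 <= G.
  move=> z Xz; apply: ub_le_sup; last by exists z.
  exact: (G_bounded (ltW K20) A1 theta_s (Xx i0) XD).
apply: ub_ereal_sup => _ [t _ <-].
set Vt := 1 + enorm (t - theta_hs) ^+ 2.
have Vt0 : 0 < Vt by rewrite /Vt ltr_pwDl // exprn_ge0 // enorm_ge0.
pose w := fun v : 'rV[R]_d => 1 + psi * (1 + enorm (v - theta_s) ^+ 2).
have mw : measurable_fun setT w.
  apply: measurable_realfun.measurable_funD => //.
  apply: measurable_realfun.measurable_funM => //.
  apply: measurable_realfun.measurable_funD => //.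
  exact: menorm2.
have w0 : forall v, 0 <= w v.
  move=> v; rewrite /w; have := sqr_ge0 (enorm (v - theta_s)).
  move=> h; apply: addr_ge0 => //; apply: mulr_ge0; [exact: ltW|exact: addr_ge0].
have hB : forall (xx : 'I_n -> 'rV[R]_m), (forall i, X (xx i)) ->
   forall S : {set 'I_n}, #|S| = b ->
   (\int[mu_xi]_v (w (sgd_step (fun th i => gradf th (xx i)) eta b S t v))%:E <= (M * Vt)%:E)%E.
  move=> xx Xxx S Sb.
  set u := t - (eta / b%:R) *: (\sum_(i in S) gradf t (xx i)) - theta_s.
  rewrite (eq_integral (fun v : 'rV[R]_d => (1 + psi * (1 + enorm (u + eta *: v) ^+ 2))%:E)); last first.
    by move=> v _; rewrite /w /sgd_step /u addrAC.
  rewrite (integral_step hmean hvar) lee_fin.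
  exact: (K2bound A1 t theta_hs eta sigma2 Xxx Sb b0 XG (ltW psi0)).
have hsame : forall th i, i != i0 -> gradf th (x i) = gradf th (xh i).
  by move=> th i hi; rewrite hi0.
have := core hP hPh hsame b0 bn mw w0 (hB _ Xx) (hB _ Xxh).
move=> hc.
apply: le_trans (lee_wpmul2r _ hc) _; first by rewrite lee_fin invr_ge0 ltW.
rewrite -EFinM lee_fin.
have Vtn : Vt != 0 by rewrite gt_eqF.
rewrite le_eqVlt; apply/orP; left; apply/eqP; field.
by rewrite Vtn andbT pnatr_eq0 -lt0n.
Qed.
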